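(* Let $1\leq k\leq n$, let $\Lambda_1,\dots,\Lambda_d\subset\mathbb{P}^n$ be $(k-1)$-dimensional linear subspaces satisfying $\mathrm{SP}(n-k)$, and let $P\subset\mathbb{P}^n$ be a linear subspace of dimension $\alpha\geq 0$. Let $2\leq r\leq d-1$ be an integer such that $P\cap\Lambda_i=\emptyset$ for $i=1,\dots,r$ and $P\cap\Lambda_i\neq\emptyset$ for $i=r+1,\dots,d$. Let $\pi_P\colon\mathbb{P}^n\dashrightarrow\mathbb{P}^{n-\alpha-1}$ be the linear projection from $P$ and set $\Gamma_i:=\pi_P(\Lambda_i)$ for $i=1,\dots,r$ (these are $(k-1)$-planes). Then $\Gamma_1,\dots,\Gamma_r$ satisfy $\mathrm{SP}(n-\alpha-1-k)$ in $\mathbb{P}^{n-\alpha-1}$.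
   Context: For $(k-1)$-dimensional linear subspaces $\Lambda_1,\dots,\Lambda_e\subset\mathbb{P}^N$ (not necessarily distinct), $\mathrm{SP}(N-k)$ means: for every $j\in\{1,\dots,e\}$ and every $(N-k)$-dimensional linear subspace $L\subset\mathbb{P}^N$ meeting each $\Lambda_i$ with $i\neq j$, $L$ also meets $\Lambda_j$. *)

(* Defs.v *)
From HB Require Import structures.
From mathcomp Require Import all_boot all_order all_algebra.
Unset Printing Implicit Defensive.
Import GRing.Theory.
Local Open Scope ring_scope.

(* Projective space P^N over K is modelled by row vectors K^(N+1):
   a projective linear subspace of dimension a is the row space of a
   matrix of rank a+1; the empty subspace is the zero space. *)

Definition meets {K : fieldType} {m p q : nat}
  (A : 'M[K]_(p, m)) (B : 'M[K]_(q, m)) : bool :=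
  (A :&: B)%MS != 0.

(* SP(N-k) for a family Lam_1..Lam_e of (k-1)-planes in P^N, where the
   ambient vector space is K^m with m = N+1: every (N-k)-plane L
   (i.e. rank m-k) meeting all Lam_i with i <> j also meets Lam_j. *)
Definition SP {K : fieldType} (m k : nat) {e p : nat} (Lam : 'I_e -> 'M[K]_(p, m)) : Prop :=
  forall (j : 'I_e) (L : 'M[K]_m),
    \rank L = (m - k)%N ->
    (forall i : 'I_e, i != j -> meets L (Lam i)) ->
    meets L (Lam j).

(* Main.v *)
Require Import Defs.
From mathcomp Require Import all_boot all_order all_algebra.
From mathcomp Require Import zify.
Local Open Scope ring_scope.

Lemma meetsP {K : fieldType} {m p q : nat} (A : 'M[K]_(p, m)) (B : 'M[K]_(q, m)) :
  meets A B <-> exists v : 'rV_m, [/\ (v <= A)%MS, (v <= B)%MS & v != 0].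
Proof.
rewrite /meets; split.
  by move/rowV0Pn=> [v]; rewrite sub_capmx => /andP[h1 h2] h3; exists v.
move=> [v [h1 h2 h3]]; apply/rowV0Pn; exists v => //.
by rewrite sub_capmx h1.
Qed.

Theorem lemma2p13 (K : closedFieldType) (n k d alpha r : nat)
  (Lam : 'I_d -> 'M[K]_(n.+1)) (P : 'M[K]_(n.+1))
  (M : 'M[K]_(n.+1, n - alpha))
  (hk1 : (1 <= k)%N) (hkn : (k <= n)%N)
  (hLam : forall i, \rank (Lam i) = k)
  (hSP : SP n.+1 k Lam)
  (hP : \rank P = alpha.+1)
  (hr2 : (2 <= r)%N) (hrd : (r < d)%N)
  (hdisj : forall i : 'I_d, (i < r)%N -> ~~ meets P (Lam i))
  (hmeet : forall i : 'I_d, (r <= i)%N -> meets P (Lam i))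
  (hker : (kermx M == P)%MS) (hfull : row_full M) :
  SP (n - alpha) k (fun j : 'I_r => Lam (widen_ord (ltnW hrd) j) *m M).
Proof.
move=> j L' hL' hmt.
have [i0 hi0] : exists i0 : 'I_r, i0 != j.
  have h0 : (0 < r)%N by apply: leq_trans hr2.
  have h1 : (1 < r)%N by [].
  case: (eqVneq (Ordinal h0) j) => e.
    by exists (Ordinal h1); rewrite -e.
  by exists (Ordinal h0).
move/andP: hker => [hkP hPk].
have Prk : (\rank M = n - alpha)%N by move/eqnP: hfull.
have hrkL' : (k <= n - alpha)%N.
  case: (leqP k (n - alpha)) => // hlt.
  have : meets L' (Lam (widen_ord (ltnW hrd) i0) *m M) by apply: hmt.
  have -> : L' = 0.
    by apply/eqP; rewrite -mxrank_eq0 hL'; apply/eqP; apply/eqP; rewrite subn_eq0 ltnW.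
  by rewrite /meets cap0mx eqxx.
set L := kermx (M *m cokermx L').
have hsubL : forall v : 'rV_n.+1, (v <= L)%MS = (v *m M <= L')%MS.
  move=> v; rewrite [in RHS]submxE /L; apply/idP/idP.
    by move/sub_kermxP; rewrite mulmxA => ->.
  by move/eqP => h; apply/sub_kermxP; rewrite mulmxA.
have hPL : (P <= L)%MS.
  apply: submx_trans hPk _; apply/sub_kermxP; by rewrite mulmxA mulmx_ker mul0mx.
have rkL : \rank L = (n.+1 - k)%N.
  rewrite mxrank_ker (eqmxMfull _ hfull) mxrank_coker hL'.
  have h1 : (alpha < n.+1)%N.
    by rewrite -hP rank_leq_row.
  have h2 : (alpha <= n)%N by [].
  lia.
have : meets L (Lam (widen_ord (ltnW hrd) j)).
  apply: (hSP _ L rkL) => i hij.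
  case: (ltnP i r) => hir.
    have -> : i = widen_ord (ltnW hrd) (Ordinal hir) by apply: val_inj.
    have hne : Ordinal hir != j.
      apply: contra hij => /eqP <-; exact/eqP/val_inj.
    move/meetsP: (hmt _ hne) => [w [hw1 hw2 hw3]].
    move/submxP: hw2 => [c ->] in hw1 hw3 *.
    apply/meetsP; exists (c *m Lam (widen_ord (ltnW hrd) (Ordinal hir))); split.
    + by rewrite hsubL -mulmxA.
    + exact: submxMl.
    + by apply: contraNneq hw3 => h; rewrite mulmxA h mul0mx.
  move/meetsP: (hmeet i hir) => [v [hv1 hv2 hv3]].
  by apply/meetsP; exists v; split => //; apply: submx_trans hPL.
move/meetsP => [v [hv1 hv2 hv3]].
apply/meetsP; exists (v *m M); split.
  + by rewrite -hsubL.
  + exact: submxMr.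
  + apply/negP => /eqP hz.
    have hvP : (v <= P)%MS by apply: submx_trans hkP; apply/sub_kermxP.
    move: (hdisj (widen_ord (ltnW hrd) j) (ltn_ord j)) => /negP; apply.
    by apply/meetsP; exists v.
Qed.
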